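(* Let $M$ be the second moment matrix of the observed variables, $M_{ij}=\mathbb E[v_iv_j]$, and let $\hat M$ be its empirical estimate from $n$ i.i.d. samples. Let $\hat a$ be the estimate of the $m$ accuracies $a_i=\mathbb E[v_iY(i)]$ obtained from $\hat M$ by the triplet method. Define $a_{\min}=\min\{\min_i|\hat a_i|,\min_i|a_i|\}$ and assume $\mathrm{sign}(a_i)=\mathrm{sign}(\hat a_i)$ for all $i$. Assume further that $n$ exceeds some $n_0$ such that $a_{\min}>0$ and $\hat M_{ij}\neq0$. Then $$\mathbb E\big[\|\hat a-a\|_2\big]\le C_a\frac{1}{a_{\min}^5}\sqrt{\frac mn}$$ for some constant $C_a$.
   Context: Observed variables $v_i\in\{\pm1\}$ each attached to a hidden variable $Y(i)\in\{\pm1\}$ in a binary Ising model. Triplet method: for each accuracy to estimate, pick indices forming a triplet $(i,j,k)$ of observed variables pairwise conditionally independent given $Y(i)$ (so that $\mathbb E[v_iv_j]=a_ia_j$ etc.), and set $|\hat a_i|=\big(|\hat M_{ij}||\hat M_{ik}|/|\hat M_{jk}|\big)^{1/2}$ and analogously for $j,k$; at most one triplet is used per accuracy. *)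

(* Defs.v *)
From HB Require Import structures.
From mathcomp Require Import all_boot all_order all_algebra.
Set Implicit Arguments. Unset Strict Implicit. Unset Printing Implicit Defensive.
Import Order.TTheory GRing.Theory Num.Theory.
Local Open Scope ring_scope.

(* Population distribution: a finite type T of outcomes (joint values of the
   observed variables v and the hidden variables Y) with probability mass p. *)
Definition is_prob (R : rcfType) (T : finType) (p : T -> R) : Prop :=
  (forall t, 0 <= p t) /\ \sum_(t : T) p t = 1.

Definition pm1 (R : rcfType) (x : R) : bool := (x == 1) || (x == -1).

Definition Epop (R : rcfType) (T : finType) (p : T -> R) (f : T -> R) : R :=
  \sum_(t : T) p t * f t.

Definition accuracy (R : rcfType) (T : finType) (m : nat) (p : T -> R)
  (v Y : T -> 'I_m -> R) (i : 'I_m) : R :=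
  Epop p (fun t => v t i * Y t i).

Definition Mpop (R : rcfType) (T : finType) (m : nat) (p : T -> R)
  (v : T -> 'I_m -> R) (i j : 'I_m) : R :=
  Epop p (fun t => v t i * v t j).

Definition sample_prob (R : rcfType) (T : finType) (n : nat) (p : T -> R)
  (s : {ffun 'I_n -> T}) : R := \prod_(k < n) p (s k).

Definition Esample (R : rcfType) (T : finType) (n : nat) (p : T -> R)
  (f : {ffun 'I_n -> T} -> R) : R :=
  \sum_(s : {ffun 'I_n -> T}) sample_prob p s * f s.

Definition Mhat (R : rcfType) (T : finType) (m n : nat) (v : T -> 'I_m -> R)
  (s : {ffun 'I_n -> T}) (i j : 'I_m) : R :=
  n%:R^-1 * \sum_(k < n) v (s k) i * v (s k) j.

Definition triplet_abs (R : rcfType) (m : nat) (M : 'I_m -> 'I_m -> R)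
  (i j k : 'I_m) : R :=
  Num.sqrt (`|M i j| * `|M i k| / `|M j k|).

(* Triplet estimate of a_i: sign choice sg (a +-1 value) times magnitude,
   where tri i = (j, k) is the triplet (i, j, k) used for accuracy i. *)
Definition ahat (R : rcfType) (T : finType) (m n : nat) (v : T -> 'I_m -> R)
  (tri : 'I_m -> 'I_m * 'I_m) (sg : {ffun 'I_n -> T} -> 'I_m -> R)
  (s : {ffun 'I_n -> T}) (i : 'I_m) : R :=
  sg s i * triplet_abs (Mhat v s) i (tri i).1 (tri i).2.

Definition norm2 (R : rcfType) (m : nat) (x : 'I_m -> R) : R :=
  Num.sqrt (\sum_(i < m) x i ^+ 2).

(* Main.v *)
Require Import Defs.
From HB Require Import structures.
From mathcomp Require Import all_boot all_order all_algebra.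
From mathcomp Require Import ring lra.
Import Order.TTheory GRing.Theory Num.Theory.
Local Open Scope ring_scope.
Set Implicit Arguments. Unset Strict Implicit.

Section Samp.
Variables (R : rcfType) (T : finType) (p : T -> R).
Hypothesis p_ge0 : forall t, 0 <= p t.
Hypothesis p_sum : \sum_(t : T) p t = 1.

Definition fcons n (t : T) (s : {ffun 'I_n -> T}) : {ffun 'I_n.+1 -> T} :=
  [ffun k => if unlift ord0 k is Some j then s j else t].
Definition ftail n (f : {ffun 'I_n.+1 -> T}) : T * {ffun 'I_n -> T} :=
  (f ord0, [ffun j => f (lift ord0 j)]).

Lemma fcons0 n t (s : {ffun 'I_n -> T}) : fcons t s ord0 = t.
Proof. by rewrite /fcons ffunE unlift_none. Qed.
Lemma fconsS n t (s : {ffun 'I_n -> T}) j : fcons t s (lift ord0 j) = s j.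
Proof. by rewrite /fcons ffunE liftK. Qed.

Lemma fcons_bij n : bijective (fun u : T * {ffun 'I_n -> T} => fcons u.1 u.2).
Proof.
exists (@ftail n).
- case=> t s; rewrite /ftail /= fcons0; congr pair; apply/ffunP=> j.
  by rewrite ffunE fconsS.
- move=> f; apply/ffunP=> k; rewrite /ftail /fcons ffunE.
  case: unliftP => [j ->|->] //; by rewrite ffunE.
Qed.

Lemma sample_prob_cons n t (s : {ffun 'I_n -> T}) :
  sample_prob p (fcons t s) = p t * sample_prob p s.
Proof.
rewrite /sample_prob big_ord_recl fcons0; congr (_ * _).
by apply: eq_bigr => j _; rewrite fconsS.
Qed.

Lemma Es_cons n (F : {ffun 'I_n.+1 -> T} -> R) :
  Esample p F = \sum_(t : T) p t * Esample p (fun s => F (fcons t s)).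
Proof.
rewrite /Esample (reindex _ (onW_bij _ (@fcons_bij n))) /=.
rewrite -(pair_bigA _ (fun t s => sample_prob p (fcons t s) * F (fcons t s))) /=.
apply: eq_bigr => t _; rewrite big_distrr /=; apply: eq_bigr => s _.
by rewrite sample_prob_cons mulrA.
Qed.

Lemma sample_prob_ge0 n (s : {ffun 'I_n -> T}) : 0 <= sample_prob p s.
Proof. by apply: prodr_ge0 => k _. Qed.

Lemma Es_le n (F G : {ffun 'I_n -> T} -> R) :
  (forall s, 0 < sample_prob p s -> F s <= G s) -> Esample p F <= Esample p G.
Proof.
move=> H; apply: ler_sum => s _.
have := sample_prob_ge0 s; rewrite le_eqVlt => /orP [/eqP <-|/[dup] h /H h2].
  by rewrite !mul0r.
by rewrite ler_pM2l.
Qed.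

Lemma Es_ge0 n (F : {ffun 'I_n -> T} -> R) :
  (forall s, 0 <= F s) -> 0 <= Esample p F.
Proof. by move=> H; apply: sumr_ge0 => s _; rewrite mulr_ge0 ?sample_prob_ge0. Qed.

Lemma Es1 n : Esample p (fun _ : {ffun 'I_n -> T} => 1) = 1.
Proof.
elim: n => [|n IH].
  rewrite /Esample /sample_prob.
  under eq_bigr do rewrite big_ord0 mulr1.
  by rewrite sumr_const card_ffun card_ord expn0.
by rewrite Es_cons; under eq_bigr do rewrite IH mulr1.
Qed.

Lemma EsD n (F G : {ffun 'I_n -> T} -> R) :
  Esample p (fun s => F s + G s) = Esample p F + Esample p G.
Proof. by rewrite /Esample -big_split; apply: eq_bigr => s _; rewrite mulrDr. Qed.

Lemma EsZ n c (F : {ffun 'I_n -> T} -> R) :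
  Esample p (fun s => c * F s) = c * Esample p F.
Proof. by rewrite /Esample big_distrr; apply: eq_bigr => s _; rewrite mulrCA. Qed.

Lemma Es_sum n (I : finType) (F : I -> {ffun 'I_n -> T} -> R) :
  Esample p (fun s => \sum_(i : I) F i s) = \sum_(i : I) Esample p (F i).
Proof.
rewrite /Esample (exchange_big) /=; apply: eq_bigr => s _.
by rewrite big_distrr.
Qed.

Variable X : T -> R.
Hypothesis X0 : \sum_(t : T) p t * X t = 0.
Hypothesis X2 : forall t, X t ^+ 2 <= 4.

Definition Ssum n (s : {ffun 'I_n -> T}) : R := \sum_(k < n) X (s k).

Lemma Ssum_cons n t (s : {ffun 'I_n -> T}) : Ssum (fcons t s) = X t + Ssum s.
Proof.
rewrite /Ssum big_ord_recl fcons0; congr (_ + _).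
by apply: eq_bigr => j _; rewrite fconsS.
Qed.

Lemma Es_ext n (F G : {ffun 'I_n -> T} -> R) :
  (forall s, F s = G s) -> Esample p F = Esample p G.
Proof. by move=> H; apply: eq_bigr => s _; rewrite H. Qed.

Lemma Es_consS n (H : R -> R) :
  Esample p (fun f : {ffun 'I_n.+1 -> T} => H (Ssum f)) =
  \sum_(t : T) p t * Esample p (fun s : {ffun 'I_n -> T} => H (X t + Ssum s)).
Proof.
rewrite Es_cons; apply: eq_bigr => t _; congr (_ * _).
by apply: Es_ext => s; rewrite Ssum_cons.
Qed.

Lemma ES1 n : Esample p (@Ssum n) = 0.
Proof.
elim: n => [|n IH].
  by rewrite /Esample; apply: big1 => s _; rewrite /Ssum big_ord0 mulr0.
rewrite (Es_consS n id) /=.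
have E : forall t, Esample p (fun s : {ffun 'I_n -> T} => X t + Ssum s) =
   X t * Esample p (fun _ : {ffun 'I_n -> T} => 1) + Esample p (@Ssum n).
  by move=> t; rewrite -EsZ -EsD; apply: Es_ext => s /=; rewrite mulr1.
under eq_bigr do rewrite E Es1 IH mulr1 addr0.
done.
Qed.

Lemma ES2 n : Esample p (fun s : {ffun 'I_n -> T} => Ssum s ^+ 2) <= 4 * n%:R.
Proof.
elim: n => [|n IH].
  rewrite mulr0 /Esample big1 // => s _.
  by rewrite /Ssum big_ord0 expr0n mulr0.
rewrite (Es_consS n (fun x => x ^+ 2)) /=.
have E : forall t, Esample p (fun s : {ffun 'I_n -> T} => (X t + Ssum s) ^+ 2) =
   X t ^+ 2 * Esample p (fun _ : {ffun 'I_n -> T} => 1) + (2 * X t * Esample p (@Ssum n) +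
   Esample p (fun s : {ffun 'I_n -> T} => Ssum s ^+ 2)).
  move=> t; rewrite -!EsZ -!EsD; apply: Es_ext => s; ring.
under eq_bigr do rewrite E Es1 ES1 mulr0 add0r mulr1.
rewrite (_ : \sum_(t : T) _ = \sum_(t : T) p t * X t ^+ 2 +
    Esample p (fun s : {ffun 'I_n -> T} => Ssum s ^+ 2)); last first.
  rewrite -[X in _ + X]mul1r -p_sum big_distrl -big_split; apply: eq_bigr => t _.
  by rewrite /= mulrDr.
rewrite -[n.+1]addn1 natrD.
suff : \sum_(t : T) p t * X t ^+ 2 <= 4 by lra.
apply: (le_trans (y := \sum_(t : T) p t * 4)).
  by apply: ler_sum => t _; apply: ler_wpM2l.
by rewrite -big_distrl /= p_sum mul1r.
Qed.

Lemma ES4 n : Esample p (fun s : {ffun 'I_n -> T} => Ssum s ^+ 4) <= 64 * n%:R ^+ 2.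
Proof.
elim: n => [|n IH].
  rewrite expr0n mulr0 /Esample big1 // => s _.
  by rewrite /Ssum big_ord0 expr0n mulr0.
rewrite (Es_consS n (fun x => x ^+ 4)) /=.
have E : forall t, Esample p (fun s : {ffun 'I_n -> T} => (X t + Ssum s) ^+ 4) =
   X t ^+ 4 * Esample p (fun _ : {ffun 'I_n -> T} => 1) + (4 * X t ^+ 3 * Esample p (@Ssum n) +
   (6 * X t ^+ 2 * Esample p (fun s : {ffun 'I_n -> T} => Ssum s ^+ 2) +
   (4 * X t * Esample p (fun s : {ffun 'I_n -> T} => Ssum s ^+ 3) +
   Esample p (fun s : {ffun 'I_n -> T} => Ssum s ^+ 4)))).
  move=> t; rewrite -!EsZ -!EsD; apply: Es_ext => s; ring.
under eq_bigr do rewrite E Es1 ES1 mulr0 add0r mulr1.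
set E2 := Esample p (fun s : {ffun 'I_n -> T} => Ssum s ^+ 2).
set E3 := Esample p (fun s : {ffun 'I_n -> T} => Ssum s ^+ 3).
set E4 := Esample p (fun s : {ffun 'I_n -> T} => Ssum s ^+ 4).
rewrite (_ : \sum_(t : T) _ = \sum_(t : T) p t * (X t ^+ 4 + 6 * X t ^+ 2 * E2)
    + 4 * E3 * (\sum_(t : T) p t * X t) + E4); last first.
  rewrite -[X in _ + X]mul1r -p_sum !big_distrl big_distrr -!big_split /=.
  by apply: eq_bigr => t _ /=; ring.
rewrite X0 mulr0 addr0.
have E2ge : 0 <= E2 by apply: Es_ge0 => s; apply: sqr_ge0.
have := ES2 n; rewrite -/E2 => E2le.
have B : \sum_(t : T) p t * (X t ^+ 4 + 6 * X t ^+ 2 * E2) <= 16 + 96 * n%:R.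
  apply: (le_trans (y := \sum_(t : T) p t * (16 + 96 * n%:R))); last first.
    by rewrite -big_distrl /= p_sum mul1r.
  apply: ler_sum => t _; apply: ler_wpM2l => //.
  have h2 := X2 t; have h0 : 0 <= X t ^+ 2 by apply: sqr_ge0.
  have -> : X t ^+ 4 = X t ^+ 2 * X t ^+ 2 by rewrite -exprD.
  nra.
rewrite -[n.+1]addn1 natrD; have n0 : 0 <= n%:R :> R by [].
have -> : 64 * (n%:R + 1) ^+ 2 = 64 * n%:R ^+ 2 + 128 * n%:R + 64 :> R by ring.
have IH4 : E4 <= 64 * n%:R ^+ 2 := IH. clearbody E2 E3 E4; lra.
Qed.
End Samp.

Unset Implicit Arguments.

Lemma sqr_abs {R : rcfType} (d : R) : d ^+ 2 = `|d| ^+ 2.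
Proof. by rewrite real_normK // num_real. Qed.

Lemma le_mulr1 (R : rcfType) (x y e : R) :
  0 <= x -> x <= e -> 0 <= y -> y <= 1 -> x * y <= e.
Proof. by move=> x0 xe y0 y1; have := ler_pM x0 y0 xe y1; rewrite mulr1. Qed.
Lemma le_mull1 (R : rcfType) (x y e : R) :
  0 <= x -> x <= e -> 0 <= y -> y <= 1 -> y * x <= e.
Proof. by move=> *; rewrite mulrC; apply: le_mulr1. Qed.

Lemma sqr_le (R : rcfType) (x y : R) : 0 <= x -> x <= y -> x ^+ 2 <= y ^+ 2.
Proof. by move=> x0 xy; apply: lerXn2r; rewrite ?nnegrE //; apply: le_trans xy. Qed.

Lemma key_abs (R : rcfType) (N a X Y Yj Yk A B D Q e1 e2 e3 : R) :
  1 <= N -> 0 < a -> a <= Y -> Y <= 1 -> a <= Yj -> Yj <= 1 -> a <= Yk -> Yk <= 1 ->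
  0 <= A -> A <= 1 -> 0 <= B -> B <= 1 -> 0 < D -> D <= 1 -> 1 <= N * D ->
  Q * D = A * B -> X ^+ 2 = Q -> 0 <= X -> 0 <= Q ->
  0 <= e1 -> 0 <= e2 -> 0 <= e3 ->
  `|A - Y * Yj| <= e1 -> `|B - Y * Yk| <= e2 -> `|D - Yj * Yk| <= e3 ->
  (X - Y) ^+ 2 <= 12 / a ^+ 10 * (e1 ^+ 2 + e2 ^+ 2 + e3 ^+ 2)
     + 64 * N / a ^+ 8 * (e1 ^+ 2 ^+ 2 + e2 ^+ 2 ^+ 2 + e3 ^+ 2 ^+ 2).
Proof.
move=> N1 a0 hai hai1 Yj0' haj1 Yk0' hak1 A0 hA B0 hB D0 hD hND hQD hX2 hX0 hQ0 e10 e20 e30 hd1 hd2 hd3.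
have a1 : a <= 1 by lra.
have Yj0 : 0 <= Yj by lra.
have Yk0 : 0 <= Yk by lra.
have D0ge : a ^+ 2 <= Yj * Yk by rewrite expr2; apply: ler_pM; lra.
have a20 : 0 < a ^+ 2 by rewrite exprn_gt0.
have a80 : 0 < a ^+ 8 by rewrite exprn_gt0.
have a100 : 0 < a ^+ 10 by rewrite exprn_gt0.
have T1 : 0 <= 12 / a ^+ 10 * (e1 ^+ 2 + e2 ^+ 2 + e3 ^+ 2).
  apply: mulr_ge0; first by apply: divr_ge0; lra.
  have := sqr_ge0 e1; have := sqr_ge0 e2; have := sqr_ge0 e3; lra.
have T2 : 0 <= 64 * N / a ^+ 8 * (e1 ^+ 2 ^+ 2 + e2 ^+ 2 ^+ 2 + e3 ^+ 2 ^+ 2).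
  apply: mulr_ge0; first by apply: divr_ge0; lra.
  have := sqr_ge0 (e1 ^+ 2); have := sqr_ge0 (e2 ^+ 2); have := sqr_ge0 (e3 ^+ 2); lra.
case: (boolP [&& 2 * e1 < a ^+ 2, 2 * e2 < a ^+ 2 & 2 * e3 < a ^+ 2]) => [/and3P [g1 g2 g3]|bad].
  have Y0 : 0 <= Y by lra.
  have nA := normr_ge0 (A - Y * Yj); have nB := normr_ge0 (B - Y * Yk).
  have nD := normr_ge0 (D - Yj * Yk).
  move/ler_normlP: (hd3) => [h3a h3b].
  have P1 : Yj * Yk <= 1 by apply: le_mulr1.
  have P0 : 0 <= Yj * Yk by apply: mulr_ge0.
  have Dge : a ^+ 2 <= 2 * D by lra.
  have Y1 : 0 <= Y * Yj <= 1 by rewrite mulr_ge0 //= le_mulr1.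
  have Y2 : 0 <= Y * Yk <= 1 by rewrite mulr_ge0 //= le_mulr1.
  case/andP: Y1 => Y1a Y1b; case/andP: Y2 => Y2a Y2b.
  have hAB : `|A * B - (Y * Yj) * (Y * Yk)| <= e1 + e2.
    have -> : A * B - (Y * Yj) * (Y * Yk) = (A - Y * Yj) * B + (Y * Yj) * (B - Y * Yk) by ring.
    apply: le_trans (ler_normD _ _) _; rewrite !normrM (ger0_norm B0) (ger0_norm Y0) (ger0_norm Yj0).
    by apply: lerD; [apply: le_mulr1 | apply: le_mull1].
  have nAB := normr_ge0 (A * B - (Y * Yj) * (Y * Yk)).
  have hNum : `|A * B * (Yj * Yk) - (Y * Yj) * (Y * Yk) * D| <= e1 + e2 + e3.
    have -> : A * B * (Yj * Yk) - (Y * Yj) * (Y * Yk) * D =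
       (A * B - (Y * Yj) * (Y * Yk)) * (Yj * Yk) + (Y * Yj) * (Y * Yk) * (Yj * Yk - D) by ring.
    apply: le_trans (ler_normD _ _) _; rewrite !normrM (ger0_norm Y0) (ger0_norm Yj0) (ger0_norm Yk0).
    have : `|A * B - (Y * Yj) * (Y * Yk)| * (Yj * Yk) <= e1 + e2.
      by apply: le_mulr1.
    have : Y * Yj * (Y * Yk) * `|Yj * Yk - D| <= e3.
      rewrite distrC; apply: le_mull1 => //; first by apply: mulr_ge0.
      by apply: le_mulr1.
    lra.
  have hid : (Q - Y ^+ 2) * (D * (Yj * Yk)) = A * B * (Yj * Yk) - (Y * Yj) * (Y * Yk) * D.
    apply/eqP; rewrite -subr_eq0; apply/eqP.
    transitivity ((Q * D - A * B) * (Yj * Yk)); first by ring.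
    by rewrite hQD subrr mul0r.
  set E := e1 + e2 + e3.
  have E0 : 0 <= E by rewrite /E !addr_ge0.
  have Z1 : (Q - Y ^+ 2) ^+ 2 * (D * (Yj * Yk)) ^+ 2 <= E ^+ 2.
    rewrite -exprMn hid (sqr_abs (A * B * (Yj * Yk) - _)).
    by apply: lerXn2r; rewrite ?nnegrE.
  have DP : a ^+ 2 * a ^+ 2 <= 2 * D * (Yj * Yk).
    by apply: ler_pM => //; apply: ltW.
  have DP2 : (a ^+ 2 * a ^+ 2) ^+ 2 <= 4 * (D * (Yj * Yk)) ^+ 2.
    have -> : 4 * (D * (Yj * Yk)) ^+ 2 = (2 * D * (Yj * Yk)) ^+ 2 by ring.
    by apply: sqr_le => //; rewrite mulr_ge0 // ltW.
  have WS : (X - Y) ^+ 2 * (X + Y) ^+ 2 = (Q - Y ^+ 2) ^+ 2 by rewrite -hX2; ring.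
  have Sge : a ^+ 2 <= (X + Y) ^+ 2.
    by apply: sqr_le; [apply: ltW | apply: (le_trans hai); rewrite ?lerDl ?lerDr].
  have W0 := sqr_ge0 (X - Y).
  have Z0 := sqr_ge0 (Q - Y ^+ 2).
  have C1 : (X - Y) ^+ 2 * (a ^+ 2 * (a ^+ 2 * a ^+ 2) ^+ 2) <= 4 * E ^+ 2.
    have : (X - Y) ^+ 2 * a ^+ 2 <= (Q - Y ^+ 2) ^+ 2 by rewrite -WS; apply: ler_wpM2l.
    move=> C; rewrite mulrA.
    apply: le_trans (ler_pM _ _ C DP2) _.
    - by apply: mulr_ge0 => //; apply: ltW.
    - by apply: sqr_ge0.
    - lra.
  have a10 : a ^+ 10 = a ^+ 2 * (a ^+ 2 * a ^+ 2) ^+ 2 by rewrite -exprD -exprM -exprD.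
  have W1 : (X - Y) ^+ 2 <= 4 * E ^+ 2 / a ^+ 10 by rewrite ler_pdivlMr // a10.
  have E3 : 4 * E ^+ 2 <= 12 * (e1 ^+ 2 + e2 ^+ 2 + e3 ^+ 2).
    rewrite /E; have := sqr_ge0 (e1 - e2); have := sqr_ge0 (e1 - e3);
    have := sqr_ge0 (e2 - e3).
    have -> : (e1 + e2 + e3) ^+ 2 = e1 ^+ 2 + e2 ^+ 2 + e3 ^+ 2 + 2 * (e1 * e2 + e1 * e3 + e2 * e3) by ring.
    have -> : forall u v : R, (u - v) ^+ 2 = u ^+ 2 + v ^+ 2 - 2 * (u * v) by move=> u v; ring.
    lra.
  have W2 : 4 * E ^+ 2 / a ^+ 10 <= 12 / a ^+ 10 * (e1 ^+ 2 + e2 ^+ 2 + e3 ^+ 2).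
    by rewrite [12 / _ * _]mulrAC; apply: ler_wpM2r => //; rewrite invr_ge0 ltW.
  lra.
have QN : Q <= N.
  rewrite -(ler_pM2r D0) hQD.
  have : A * B <= 1 by apply: le_mulr1.
  lra.
have L : (X - Y) ^+ 2 <= 4 * N.
  have : (X - Y) ^+ 2 <= 2 * X ^+ 2 + 2 * Y ^+ 2.
    have := sqr_ge0 (X + Y); lra.
  have : Y ^+ 2 <= 1 by rewrite expr2; apply: le_mulr1 => //; lra.
  lra.
have S : a ^+ 8 <= 16 * (e1 ^+ 2 ^+ 2 + e2 ^+ 2 ^+ 2 + e3 ^+ 2 ^+ 2).
  have h8 : a ^+ 8 = (a ^+ 2) ^+ 2 ^+ 2 by rewrite -!exprM.
  have pw : forall e : R, 0 <= e -> a ^+ 2 <= 2 * e -> a ^+ 8 <= 16 * e ^+ 2 ^+ 2.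
    move=> e e0 he; rewrite h8.
    have : (a ^+ 2) ^+ 2 ^+ 2 <= (2 * e) ^+ 2 ^+ 2.
      by rewrite lerXn2r // ?nnegrE ?exprn_ge0 ?mulr_ge0 // ?lerXn2r // ?nnegrE ?exprn_ge0 ?mulr_ge0 // ltW.
    have -> : (2 * e) ^+ 2 ^+ 2 = 16 * e ^+ 2 ^+ 2 by ring.
    done.
  have s1 := sqr_ge0 (e1 ^+ 2); have s2 := sqr_ge0 (e2 ^+ 2); have s3 := sqr_ge0 (e3 ^+ 2).
  move: bad; rewrite !negb_and -!leNgt => /or3P [b|b|b].
  - have := pw _ e10 b; lra.
  - have := pw _ e20 b; lra.
  - have := pw _ e30 b; lra.
have : 4 * N <= 64 * N / a ^+ 8 * (e1 ^+ 2 ^+ 2 + e2 ^+ 2 ^+ 2 + e3 ^+ 2 ^+ 2).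
  rewrite mulrAC ler_pdivlMr //.
  have : 4 * N * a ^+ 8 <= 4 * N * (16 * (e1 ^+ 2 ^+ 2 + e2 ^+ 2 ^+ 2 + e3 ^+ 2 ^+ 2)).
    by apply: ler_wpM2l => //; lra.
  lra.
lra.
Qed.

Lemma key (R : rcfType) (N a x ai aj ak hij hik hjk : R) :
  1 <= N -> 0 < a ->
  a <= `|ai| -> `|ai| <= 1 -> a <= `|aj| -> `|aj| <= 1 -> a <= `|ak| -> `|ak| <= 1 ->
  `|hij| <= 1 -> `|hik| <= 1 -> `|hjk| <= 1 -> 1 <= N * `|hjk| ->
  `|x| = Num.sqrt (`|hij| * `|hik| / `|hjk|) ->
  Num.sg x = Num.sg ai ->
  (x - ai) ^+ 2 <= 12 / a ^+ 10 * ((hij - ai * aj) ^+ 2 + (hik - ai * ak) ^+ 2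
        + (hjk - aj * ak) ^+ 2)
     + 64 * N / a ^+ 8 * ((hij - ai * aj) ^+ 4 + (hik - ai * ak) ^+ 4
        + (hjk - aj * ak) ^+ 4).
Proof.
move=> N1 a0 hai hai1 haj haj1 hak hak1 hA hB hD hND hx hsg.
have ai0 : ai != 0 by rewrite -normr_gt0; apply: lt_le_trans hai.
have -> : x - ai = Num.sg ai * (`|x| - `|ai|).
  by rewrite mulrBr -{1}hsg -!numEsg.
rewrite exprMn sqr_sg ai0 mul1r.
have e4 : forall d : R, d ^+ 4 = (`|d| ^+ 2) ^+ 2.
  by move=> d; rewrite -sqr_abs -exprM.
rewrite !e4 (sqr_abs (hij - ai * aj)) (sqr_abs (hik - ai * ak)) (sqr_abs (hjk - aj * ak)).
have hd1 := ler_dist_dist hij (ai * aj).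
have hd2 := ler_dist_dist hik (ai * ak).
have hd3 := ler_dist_dist hjk (aj * ak).
rewrite !normrM in hd1 hd2 hd3.
have D0 : 0 < `|hjk| by rewrite normr_gt0; apply/eqP => h; move: hND; rewrite h normr0 mulr0; lra.
set Q := `|hij| * `|hik| / `|hjk|.
have hQ0 : 0 <= Q by rewrite /Q divr_ge0 // mulr_ge0.
have hQD : Q * `|hjk| = `|hij| * `|hik| by rewrite /Q mulfVK // gt_eqF.
have hX2 : `|x| ^+ 2 = Q by rewrite hx sqr_sqrtr.
apply: (key_abs _ _ _ _ _ _ _ _ _ _ _ _ _ _ N1 a0 hai hai1 haj haj1 hak hak1 (normr_ge0 _) hA (normr_ge0 _) hB D0 hD
  hND hQD hX2 (normr_ge0 _) hQ0 (normr_ge0 _) (normr_ge0 _) (normr_ge0 _) hd1 hd2 hd3).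
Qed.

Set Implicit Arguments. Unset Strict Implicit.
Set Implicit Arguments. Unset Strict Implicit.

Lemma pm1_norm (R : rcfType) (x : R) : pm1 x -> `|x| = 1.
Proof. by case/orP => /eqP ->; rewrite ?normrN normr1. Qed.

Lemma pm1M (R : rcfType) (x y : R) : pm1 x -> pm1 y -> pm1 (x * y).
Proof.
by case/orP => /eqP -> /orP [] /eqP ->; rewrite /pm1 ?mulN1r ?mul1r ?opprK eqxx ?orbT.
Qed.

Lemma Epop_norm (R : rcfType) (T : finType) (p : T -> R) (f : T -> R) :
  (forall t, 0 <= p t) -> \sum_t p t = 1 -> (forall t, `|f t| <= 1) ->
  `|Epop p f| <= 1.
Proof.
move=> p0 p1 hf; rewrite /Epop; apply: le_trans (ler_norm_sum _ _ _) _.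
rewrite -p1; apply: ler_sum => t _; rewrite normrM ger0_norm //.
by rewrite -[X in _ <= X]mulr1; apply: ler_wpM2l.
Qed.

Lemma sum_pm1_int (R : rcfType) n (f : 'I_n -> R) :
  (forall k, pm1 (f k)) -> exists z : int, \sum_(k < n) f k = z%:~R.
Proof.
move=> hf; apply: (big_ind (fun x => exists z : int, x = z%:~R)).
- by exists 0.
- by move=> x y [z1 ->] [z2 ->]; exists (z1 + z2); rewrite rmorphD.
- move=> k _; case/orP: (hf k) => /eqP ->; first by exists 1.
  by exists (-1); rewrite rmorphN.
Qed.

Section Main.
Variables (R : rcfType) (T : finType) (m n : nat) (p : T -> R) (v : T -> 'I_m -> R).
Hypothesis p_ge0 : forall t, 0 <= p t.
Hypothesis p_sum : \sum_t p t = 1.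
Hypothesis hv : forall t i, pm1 (v t i).
Hypothesis n0 : (0 < n)%N.

Lemma nR0 : 0 < n%:R :> R. Proof. by rewrite ltr0n. Qed.

Lemma Mhat_norm (s : {ffun 'I_n -> T}) a b : `|Mhat v s a b| <= 1.
Proof.
rewrite /Mhat normrM ger0_norm ?invr_ge0 // ler_pdivrMl ?nR0 // mulr1.
apply: le_trans (ler_norm_sum _ _ _) _.
have -> : n%:R = \sum_(k < n) (1 : R) by rewrite sumr_const card_ord.
by apply: ler_sum => k _; rewrite (pm1_norm (pm1M (hv _ _) (hv _ _))).
Qed.

Lemma Mhat_ge (s : {ffun 'I_n -> T}) a b : Mhat v s a b != 0 -> 1 <= n%:R * `|Mhat v s a b|.
Proof.
have [z hz] := sum_pm1_int (fun k => pm1M (hv (s k) a) (hv (s k) b)).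
rewrite /Mhat hz => h.
rewrite normrM [`|n%:R^-1|]ger0_norm ?invr_ge0 // mulrA mulfV ?gt_eqF ?nR0 // mul1r.
rewrite -intr_norm ler1z -gtz0_ge1 normr_gt0.
by apply: contraNneq h => ->; rewrite mulr0.
Qed.

Lemma Mpop_norm a b : `|Mpop p v a b| <= 1.
Proof. by apply: Epop_norm => // t; rewrite (pm1_norm (pm1M (hv _ _) (hv _ _))). Qed.

Definition Xab a b (t : T) : R := v t a * v t b - Mpop p v a b.

Lemma Xab0 a b : \sum_t p t * Xab a b t = 0.
Proof.
rewrite /Xab; under eq_bigr do rewrite mulrBr.
by rewrite big_split /= sumrN -big_distrl /= p_sum mul1r subrr.
Qed.

Lemma Xab2 a b t : Xab a b t ^+ 2 <= 4.
Proof.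
have h1 := pm1_norm (pm1M (hv t a) (hv t b)).
have h2 := Mpop_norm a b.
have : `|Xab a b t| <= 2.
  by apply: le_trans (ler_normB _ _) _; rewrite h1; lra.
move=> h; rewrite sqr_abs (_ : 4 = 2 ^+ 2); last by rewrite expr2; lra.
by apply: sqr_le.
Qed.

Lemma delta_eq (s : {ffun 'I_n -> T}) a b :
  Mhat v s a b - Mpop p v a b = n%:R^-1 * Ssum (Xab a b) s.
Proof.
rewrite /Ssum /Xab /Mhat big_split /= sumrN sumr_const card_ord mulrBr.
by rewrite -(mulr_natl (Mpop p v a b)) mulrA mulVf ?gt_eqF ?nR0 // mul1r.
Qed.

Lemma delta2 a b :
  Esample p (fun s : {ffun 'I_n -> T} => (Mhat v s a b - Mpop p v a b) ^+ 2) <= 4 / n%:R.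
Proof.
rewrite (Es_ext p (G := fun s : {ffun 'I_n -> T} => n%:R^-1 ^+ 2 * Ssum (Xab a b) s ^+ 2)); last first.
  by move=> s; rewrite delta_eq exprMn.
rewrite EsZ.
have := ES2 p_ge0 p_sum (Xab0 a b) (Xab2 a b) n.
have nn := nR0; move=> h.
apply: le_trans (ler_wpM2l _ h) _; first by apply: exprn_ge0; rewrite invr_ge0 ltW.
rewrite le_eqVlt; apply/orP; left; apply/eqP; field; by rewrite gt_eqF.
Qed.

Lemma delta4 a b :
  Esample p (fun s : {ffun 'I_n -> T} => (Mhat v s a b - Mpop p v a b) ^+ 2 ^+ 2) <= 64 / n%:R ^+ 2.
Proof.
rewrite (Es_ext p (G := fun s : {ffun 'I_n -> T} => n%:R^-1 ^+ 4 * Ssum (Xab a b) s ^+ 4)); last first.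
  by move=> s; rewrite delta_eq -exprM exprMn.
rewrite EsZ.
have := ES4 p_ge0 p_sum (Xab0 a b) (Xab2 a b) n.
have nn := nR0; move=> h.
apply: le_trans (ler_wpM2l _ h) _; first by apply: exprn_ge0; rewrite invr_ge0 ltW.
rewrite le_eqVlt; apply/orP; left; apply/eqP; field; by rewrite gt_eqF.
Qed.
End Main.

Unset Implicit Arguments.

Lemma Es_const (R : rcfType) (T : finType) (p : T -> R) n (k : R) :
  \sum_t p t = 1 -> Esample p (fun _ : {ffun 'I_n -> T} => k) = k.
Proof.
move=> p1; transitivity (k * Esample p (fun _ : {ffun 'I_n -> T} => 1)); last first.
  by rewrite (Es1 p1) mulr1.
by rewrite -EsZ; apply: Es_ext => s; rewrite mulr1.
Qed.

Lemma sqrt_le_am (R : rcfType) (z c : R) : 0 <= z -> 0 < c ->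
  Num.sqrt z <= (2 * c)^-1 * z + c / 2.
Proof.
move=> z0 c0; set r := Num.sqrt z.
have hr : z = r ^+ 2 by rewrite /r sqr_sqrtr.
rewrite hr -subr_ge0.
have -> : (2 * c)^-1 * r ^+ 2 + c / 2 - r = (2 * c)^-1 * (r - c) ^+ 2.
  by field; rewrite gt_eqF.
by apply: mulr_ge0; [rewrite invr_ge0; lra | apply: sqr_ge0].
Qed.

Unset Implicit Arguments.
Theorem lemma5 (R : rcfType) :
  exists Ca : R, forall (T : finType) (m n : nat) (p : T -> R)
    (v Y : T -> 'I_m -> R) (tri : 'I_m -> 'I_m * 'I_m)
    (sg : {ffun 'I_n -> T} -> 'I_m -> R) (amin : R),
  is_prob p ->
  (forall t i, pm1 (v t i)) ->
  (forall t i, pm1 (Y t i)) ->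
  (* triplet structure: (i, j, k) distinct, E[v_a v_b] = a_a a_b *)
  (forall i, [/\ i != (tri i).1, i != (tri i).2 & (tri i).1 != (tri i).2]) ->
  (forall i,
     let j := (tri i).1 in let k := (tri i).2 in
     [/\ Mpop p v i j = accuracy p v Y i * accuracy p v Y j,
         Mpop p v i k = accuracy p v Y i * accuracy p v Y k &
         Mpop p v j k = accuracy p v Y j * accuracy p v Y k]) ->
  (0 < n)%N ->
  (forall s i, pm1 (sg s i)) ->
  0 < amin ->
  (forall i, amin <= `|accuracy p v Y i|) ->
  (forall s, 0 < sample_prob p s -> forall i,
     [/\ amin <= `|ahat v tri sg s i|,
         Num.sg (ahat v tri sg s i) = Num.sg (accuracy p v Y i) &
         forall a b : 'I_m, Mhat v s a b != 0]) ->
  Esample p (fun s => norm2 (fun i => ahat v tri sg s i - accuracy p v Y i))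
    <= Ca / amin ^+ 5 * Num.sqrt (m%:R / n%:R).
Proof.
exists 112 => T m n p v Y tri sg a [p0 p1] hv hY htri hM n0 hsg a0 ha hs.
have nn : 0 < n%:R :> R by rewrite ltr0n.
have RHS0 : 0 <= 112 / a ^+ 5 * Num.sqrt (m%:R / n%:R).
  by rewrite mulr_ge0 ?sqrtr_ge0 // divr_ge0 // exprn_ge0 // ltW.
have [m0|mpos] := posnP m.
  subst m; apply: le_trans RHS0; rewrite le_eqVlt; apply/orP; left; apply/eqP.
  rewrite /Esample big1 // => s _; rewrite /norm2 big_ord0 sqrtr0 mulr0 //.
set acc := accuracy p v Y.
have acc1 : forall i, `|acc i| <= 1.
  move=> i; apply: Epop_norm => // t.
  by rewrite (pm1_norm (pm1M (hv _ _) (hY _ _))).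
have a1 : a <= 1 by apply: le_trans (ha (Ordinal mpos)) (acc1 _).
have nz : n%:R != 0 :> R by rewrite gt_eqF.
have az : a != 0 by rewrite gt_eqF.
set N := n%:R : R.
have N1 : 1 <= N by rewrite /N ler1n.
have a2_1 : a ^+ 2 <= 1 by rewrite expr2; apply: le_mulr1 => //; apply: ltW.
pose u := (a ^+ 10 * N)^-1.
have u0 : 0 <= u by rewrite /u invr_ge0 mulr_ge0 // ?exprn_ge0 ?ltW.
pose dl (s : {ffun 'I_n -> T}) x y := Mhat v s x y - Mpop p v x y.
pose G (i : 'I_m) (s : {ffun 'I_n -> T}) :=
  12 / a ^+ 10 * (dl s i (tri i).1 ^+ 2 + dl s i (tri i).2 ^+ 2 + dl s (tri i).1 (tri i).2 ^+ 2)
  + 64 * N / a ^+ 8 * (dl s i (tri i).1 ^+ 2 ^+ 2 + dl s i (tri i).2 ^+ 2 ^+ 2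
                        + dl s (tri i).1 (tri i).2 ^+ 2 ^+ 2).
pose Z (s : {ffun 'I_n -> T}) := \sum_(i < m) (ahat v tri sg s i - acc i) ^+ 2.
have stepA : forall s, 0 < sample_prob p s -> Z s <= \sum_(i < m) G i s.
  move=> s sp; apply: ler_sum => i _.
  have [h1 h2 h3] := hs s sp i.
  move: (hM i) => /= [e1 e2 e3].
  rewrite /G /dl e1 e2 e3.
  rewrite -!exprM.
  apply: (@key R N a (ahat v tri sg s i) (acc i) (acc (tri i).1) (acc (tri i).2) (Mhat v s i (tri i).1) (Mhat v s i (tri i).2) (Mhat v s (tri i).1 (tri i).2)) => //; try exact: acc1; try exact: ha; try exact: (Mhat_norm hv n0).
  - exact: (Mhat_ge hv n0 (h3 _ _)).
  - rewrite /ahat normrM (pm1_norm (hsg s i)) mul1r /triplet_abs ger0_norm //.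
    exact: sqrtr_ge0.
have EG : forall i, Esample p (G i) <= 12544 * u.
  move=> i; rewrite /G EsD !EsZ !EsD.
  have d2 := delta2 p0 p1 hv n0; have d4 := delta4 p0 p1 hv n0.
  have c10 : 0 <= 12 / a ^+ 10 by rewrite divr_ge0 // exprn_ge0 // ltW.
  have c20 : 0 <= 64 * N / a ^+ 8 by rewrite divr_ge0 ?mulr_ge0 // ?exprn_ge0 // ltW.
  apply: (le_trans (y := 12 / a ^+ 10 * (12 / N) + 64 * N / a ^+ 8 * (192 / N ^+ 2))).
    apply: lerD; apply: ler_wpM2l => //.
      have := d2 i (tri i).1; have := d2 i (tri i).2; have := d2 (tri i).1 (tri i).2.
      rewrite /dl; lra.
    have := d4 i (tri i).1; have := d4 i (tri i).2; have := d4 (tri i).1 (tri i).2.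
    rewrite /dl; lra.
  have -> : 12 / a ^+ 10 * (12 / N) = 144 * u.
    by rewrite /u /N; field; rewrite ?nz ?az.
  have -> : 64 * N / a ^+ 8 * (192 / N ^+ 2) = 12288 * a ^+ 2 * u.
    by rewrite /u /N; field; rewrite ?nz ?az.
  have : a ^+ 2 * u <= u by rewrite -[X in _ <= X]mul1r; apply: ler_wpM2r.
  lra.
have EZ : Esample p Z <= m%:R * (12544 * u).
  apply: le_trans (Es_le p0 stepA) _.
  rewrite Es_sum.
  apply: (le_trans (y := \sum_(i < m) 12544 * u)); first by apply: ler_sum => i _; exact: EG.
  by rewrite sumr_const card_ord (mulr_natl (12544 * u) m).
set c := 112 / a ^+ 5 * Num.sqrt (m%:R / N).
have mN : 0 < m%:R / N by rewrite divr_gt0 // ltr0n.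
have c0 : 0 < c by rewrite /c mulr_gt0 ?sqrtr_gt0 // divr_gt0 // exprn_gt0.
have c2 : c ^+ 2 = m%:R * (12544 * u).
  by rewrite /c exprMn sqr_sqrtr ?ltW // /u /N; field; rewrite ?nz ?az.
apply: (le_trans (y := Esample p (fun s => (2 * c)^-1 * Z s + c / 2))).
  apply: (Es_le p0) => s _; rewrite /norm2; apply: sqrt_le_am => //.
  by apply: sumr_ge0 => i _; apply: sqr_ge0.
rewrite EsD EsZ (Es_const _ _ _ _ _ p1).
apply: (le_trans (y := (2 * c)^-1 * (c ^+ 2) + c / 2)).
  by rewrite lerD2r c2; apply: ler_wpM2l => //; rewrite invr_ge0; apply: mulr_ge0 => //; apply: ltW.
rewrite le_eqVlt; apply/orP; left; apply/eqP; field; rewrite gt_eqF //.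
Qed.
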